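(* Let $N\ge1$, $n_1,\dots,n_N\ge1$, $n=\sum_\nu n_\nu$, $m\ge1$. For $\nu=1,\dots,N$ let $Q_\nu\in\mathbb{R}^{n_\nu\times n_\nu}$ be symmetric positive definite, $c_\nu\in\mathbb{R}^{n_\nu}$, and let $X_\nu\subseteq\mathbb{R}^{n_\nu}$ be nonempty with $X=X_1\times\dots\times X_N$ convex and compact. Let $a\in\mathbb{R}^m$ with $a\ge0$ componentwise, $Q_y\in\mathbb{R}^{m\times m}$ positive definite and diagonal, and let $b,l:\mathbb{R}^n\to\mathbb{R}^m$ be differentiable and componentwise convex on $X$. Consider the Nash equilibrium problem (NEP) in which player $\nu$ solves $$\min_{x_\nu}\ \tfrac12 x_\nu^\top Q_\nu x_\nu+c_\nu^\top x_\nu+\sum_{i=1}^m a_i\max\{(Q_y^{-1}b(x))_i,\,l_i(x)\}\quad\text{s.t. } x_\nu\in X_\nu,$$ with $x=(x_\nu,x_{-\nu})$. Then this NEP has at least one Nash equilibrium. Consequently, the multi-leader-follower game described in the context has at least one Nash equilibrium.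
   Context: Notation: $x=(x_1,\dots,x_N)\in\mathbb{R}^n$ with $x_\nu\in\mathbb{R}^{n_\nu}$, and $x_{-\nu}$ denotes the vector of all $x_i$, $i\ne\nu$. The multi-leader-follower game (MLFG): given the leaders' strategies $x$, the follower solves $\min_{y\in\mathbb{R}^m}\tfrac12 y^\top Q_y y-b(x)^\top y$ s.t. $y\ge l(x)$; its unique solution (best response) is $y(x)=\max\{Q_y^{-1}b(x),l(x)\}$ (componentwise). Leader $\nu$ solves $\min_{x_\nu\in X_\nu}\theta_\nu(x_\nu,x_{-\nu})=\tfrac12 x_\nu^\top Q_\nu x_\nu+c_\nu^\top x_\nu+a^\top y(x)$. A Nash equilibrium (of the NEP or the MLFG) is a point $x^*\in X$ such that for every $\nu$, $x^*_\nu$ minimizes player $\nu$'s objective over $X_\nu$ with $x_{-\nu}=x^*_{-\nu}$ fixed. *)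

(* Defs.v *)
From HB Require Import structures.
From mathcomp Require Import all_boot all_order all_algebra.
From mathcomp Require Import all_classical all_reals all_analysis.
Set Implicit Arguments. Unset Strict Implicit. Unset Printing Implicit Defensive.
Import Order.TTheory GRing.Theory Num.Theory.
Import numFieldNormedType.Exports numFieldTopology.Exports.
Local Open Scope ring_scope.
Local Open Scope classical_set_scope.

(* Leaders' strategy x = (x_1,...,x_N) is a row vector of size
   n = \sum_nu d nu; block nu (x_nu) is [submxrow x nu : 'rV_(d nu)]. *)

Definition sym_mx (R : realType) k (Q : 'M[R]_k) := Q^T = Q.
Definition posdef_mx (R : realType) k (Q : 'M[R]_k) :=
  forall v : 'rV[R]_k, v != 0 -> 0 < (v *m Q *m v^T) 0 0.

Definition convex_set_of (R : realType) k (A : set 'rV[R]_k) :=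
  forall x y (t : R), A x -> A y -> 0 <= t <= 1 ->
    A (t *: x + (1 - t) *: y).

Definition convex_fun_on (R : realType) k (A : set 'rV[R]_k) (f : 'rV[R]_k -> R) :=
  forall x y (t : R), A x -> A y -> 0 <= t <= 1 ->
    f (t *: x + (1 - t) *: y) <= t * f x + (1 - t) * f y.

Definition prodset (R : realType) N (d : 'I_N -> nat)
  (Xs : forall nu : 'I_N, set 'rV[R]_(d nu)) : set 'rV[R]_(\sum_(nu < N) d nu) :=
  [set x | forall nu, Xs nu (submxrow x nu)].

Definition is_nash (R : realType) N (d : 'I_N -> nat)
  (Xs : forall nu : 'I_N, set 'rV[R]_(d nu))
  (theta : 'I_N -> 'rV[R]_(\sum_(nu < N) d nu) -> R)
  (xs : 'rV[R]_(\sum_(nu < N) d nu)) :=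
  prodset Xs xs /\
  forall nu (z : 'rV[R]_(\sum_(nu < N) d nu)),
    Xs nu (submxrow z nu) ->
    (forall j, j != nu -> submxrow z j = submxrow xs j) ->
    theta nu xs <= theta nu z.

Definition nep_obj (R : realType) N (d : 'I_N -> nat) m
  (Q : forall nu : 'I_N, 'M[R]_(d nu)) (c : forall nu : 'I_N, 'cV[R]_(d nu))
  (a : 'cV[R]_m) (Qy : 'M[R]_m) (b l : 'rV[R]_(\sum_(nu < N) d nu) -> 'cV[R]_m)
  (nu : 'I_N) (x : 'rV[R]_(\sum_(nu < N) d nu)) : R :=
  2^-1 * (submxrow x nu *m Q nu *m (submxrow x nu)^T) 0 0
  + (submxrow x nu *m c nu) 0 0
  + \sum_(i < m) a i 0 * Num.max ((invmx Qy *m b x) i 0) (l x i 0).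

Definition follower_br (R : realType) n m (Qy : 'M[R]_m)
  (b l : 'rV[R]_n -> 'cV[R]_m) (x : 'rV[R]_n) : 'cV[R]_m :=
  \col_i Num.max ((invmx Qy *m b x) i 0) (l x i 0).

Definition mlfg_obj (R : realType) N (d : 'I_N -> nat) m
  (Q : forall nu : 'I_N, 'M[R]_(d nu)) (c : forall nu : 'I_N, 'cV[R]_(d nu))
  (a : 'cV[R]_m) (Qy : 'M[R]_m) (b l : 'rV[R]_(\sum_(nu < N) d nu) -> 'cV[R]_m)
  (nu : 'I_N) (x : 'rV[R]_(\sum_(nu < N) d nu)) : R :=
  2^-1 * (submxrow x nu *m Q nu *m (submxrow x nu)^T) 0 0
  + (submxrow x nu *m c nu) 0 0
  + (a^T *m follower_br Qy b l x) 0 0.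

(* Main.v *)
Require Import Defs.
From HB Require Import structures.
From mathcomp Require Import all_boot all_order all_algebra.
From mathcomp Require Import all_classical all_reals all_analysis.
From mathcomp Require Import lra.
Import Order.TTheory GRing.Theory Num.Theory.
Import numFieldNormedType.Exports numFieldTopology.Exports.
Local Open Scope ring_scope.
Local Open Scope classical_set_scope.
Set Implicit Arguments.

Section H.
Variables (R : realType) (T : topologicalType).

Lemma cts_sum k (F : 'I_k -> T -> R) x :
  (forall i, {for x, continuous (F i)}) ->
  {for x, continuous (fun z => \sum_(i < k) F i z)}.
Proof.
elim: k F => [|k IH] F H.
  have -> : (fun z => \sum_(i < 0) F i z) = (fun=> 0).
    by apply/funext => z; rewrite big_ord0.
  exact: cvg_cst.
have -> : (fun z => \sum_(i < k.+1) F i z) =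
   (fun z => \sum_(i < k) F (widen_ord (leqnSn k) i) z) + F ord_max.
  by apply/funext => z; rewrite big_ord_recr /=.
apply: continuousD; last exact: H.
by apply: IH => i; apply: H.
Qed.

Definition ctsM p q (h : T -> 'M[R]_(p, q)) x :=
  forall i j, {for x, continuous (fun z => h z i j)}.
Arguments ctsM {p q} h x.

Lemma ctsM_mul p q r (h1 : T -> 'M[R]_(p, q)) (h2 : T -> 'M[R]_(q, r)) x :
  ctsM h1 x -> ctsM h2 x -> ctsM (fun z => h1 z *m h2 z) x.
Proof.
move=> H1 H2 i j.
have -> : (fun z => (h1 z *m h2 z) i j) = (fun z => \sum_k h1 z i k * h2 z k j).
  by apply/funext => z; rewrite mxE.
by apply: cts_sum => k; apply: continuousM.
Qed.

Lemma ctsM_tr p q (h : T -> 'M[R]_(p, q)) x :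
  ctsM h x -> ctsM (fun z => (h z)^T) x.
Proof.
move=> H i j.
have -> : (fun z => (h z)^T i j) = (fun z => h z j i).
  by apply/funext => z; rewrite mxE.
exact: H.
Qed.

Lemma ctsM_cst p q (A : 'M[R]_(p, q)) x : ctsM (fun=> A) x.
Proof. by move=> i j; exact: cvg_cst. Qed.

Lemma ctsM_colsub p q q' (f : 'I_q' -> 'I_q) (h : T -> 'M[R]_(p, q)) x :
  ctsM h x -> ctsM (fun z => colsub f (h z)) x.
Proof.
move=> H i j.
have -> : (fun z => colsub f (h z) i j) = (fun z => h z i (f j)).
  by apply/funext => z; rewrite mxE.
exact: H.
Qed.

Lemma ctsM_comp p q (h : T -> 'M[R]_(p, q)) x :
  {for x, continuous h} -> ctsM h x.
Proof.
move=> H i j.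
exact: (continuous_comp H (@coord_continuous R p q i j (h x))).
Qed.

Lemma cts_add (F G : T -> R) x : {for x, continuous F} -> {for x, continuous G} ->
  {for x, continuous (fun z => F z + G z)}.
Proof. exact: continuousD. Qed.
Lemma cts_mul (F G : T -> R) x : {for x, continuous F} -> {for x, continuous G} ->
  {for x, continuous (fun z => F z * G z)}.
Proof. exact: continuousM. Qed.
Lemma cts_cst (k : R) x : {for x, continuous (fun _ : T => k)}.
Proof. exact: cvg_cst. Qed.
Lemma cts_max (F G : T -> R) x : {for x, continuous F} -> {for x, continuous G} ->
  {for x, continuous (fun z => Num.max (F z) (G z))}.
Proof. exact: continuous_max. Qed.
End H.
Arguments ctsM {R T p q} h x.

Theorem mainTheorem2 (R : realType) (N : nat) (d : 'I_N -> nat) (m : nat)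
  (Q : forall nu : 'I_N, 'M[R]_(d nu)) (c : forall nu : 'I_N, 'cV[R]_(d nu))
  (Xs : forall nu : 'I_N, set 'rV[R]_(d nu))
  (a : 'cV[R]_m) (Qy : 'M[R]_m)
  (b l : 'rV[R]_(\sum_(nu < N) d nu) -> 'cV[R]_m) :
  (0 < N)%N -> (forall nu, 0 < d nu)%N -> (0 < m)%N ->
  (forall nu, sym_mx (Q nu) /\ posdef_mx (Q nu)) ->
  (forall nu, Xs nu !=set0) ->
  convex_set_of (prodset Xs) -> compact (prodset Xs) ->
  (forall i, 0 <= a i 0) ->
  posdef_mx Qy -> is_diag_mx Qy ->
  (forall x, prodset Xs x -> differentiable b x /\ differentiable l x) ->
  (forall i, convex_fun_on (prodset Xs) (fun x => b x i 0)) ->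
  (forall i, convex_fun_on (prodset Xs) (fun x => l x i 0)) ->
  (exists xs, is_nash Xs (nep_obj Q c a Qy b l) xs) /\
  (exists xs, is_nash Xs (mlfg_obj Q c a Qy b l) xs).
Proof.
move=> _ _ _ _ Xne _ Xcpt _ _ _ Hdiff _ _.
pose f nu (v : 'rV[R]_(d nu)) := 2^-1 * (v *m Q nu *m v^T) 0 0 + (v *m c nu) 0 0.
pose g (x : 'rV[R]_(\sum_(nu < N) d nu)) :=
  \sum_(i < m) a i 0 * Num.max ((invmx Qy *m b x) i 0) (l x i 0).
pose P x := \sum_nu f nu (submxrow x nu) + g x.
have objE nu x : nep_obj Q c a Qy b l nu x = f nu (submxrow x nu) + g x by [].
have mlfgE : mlfg_obj Q c a Qy b l = nep_obj Q c a Qy b l.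
  apply/funext => nu; apply/funext => x; rewrite /mlfg_obj /nep_obj; congr (_ + _).
  by rewrite mxE; apply: eq_bigr => i _; rewrite !mxE.
have Xne0 : prodset Xs !=set0.
  pose v nu := xget 0 (Xs nu).
  exists (\mxrow_nu v nu) => nu; rewrite mxrowK /v.
  by case: xgetP => // /(_ _) H; case: (Xne nu) => y /H.
have Pcts : {within prodset Xs, continuous P}.
  apply: continuous_in_subspaceT => x /set_mem Xx.
  have [db dl] := Hdiff x Xx.
  have idc : ctsM (fun z : 'rV[R]_(\sum_(nu < N) d nu) => z) x.
    by move=> i j; exact: coord_continuous.
  apply: cts_add.
    apply: cts_sum => nu.
    have Sc : ctsM (fun z : 'rV[R]_(\sum_(nu < N) d nu) => submxrow z nu) x.
      move=> i j; exact: (@ctsM_colsub R _ 1 _ _ (tagnat.Rank nu) _ x idc i j).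
    rewrite /f; apply: cts_add; last first.
      have := ctsM_mul Sc (@ctsM_cst R _ _ _ (c nu) x) 0 0. 
      exact.
    apply: cts_mul; first exact: cts_cst.
    exact: (ctsM_mul (ctsM_mul Sc (@ctsM_cst R _ _ _ (Q nu) x)) (ctsM_tr Sc) 0 0).
  apply: cts_sum => i; apply: cts_mul; first exact: cts_cst.
  apply: cts_max.
    exact: (ctsM_mul (@ctsM_cst R _ _ _ (invmx Qy) x) (ctsM_comp (differentiable_continuous db)) i 0).
  exact: (ctsM_comp (differentiable_continuous dl) i 0).
have [xs /set_mem Xxs xsmin] := EVT_min_rV Xne0 Xcpt Pcts.
have nash : is_nash Xs (nep_obj Q c a Qy b l) xs.
  split=> // nu z Xz zeq.
  have Xz' : prodset Xs z.
    move=> j; case: (eqVneq j nu) => [->//|jn]; rewrite zeq //; exact: Xxs.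
  have H := xsmin z (mem_set Xz'); rewrite !objE.
  have e1 : \sum_i f i (submxrow z i) = f nu (submxrow z nu) + \sum_(i < N | i != nu) f i (submxrow xs i).
    by rewrite (bigD1 nu) //=; congr (_ + _); apply: eq_bigr => i inu; rewrite zeq.
  have e2 : \sum_i f i (submxrow xs i) = f nu (submxrow xs nu) + \sum_(i < N | i != nu) f i (submxrow xs i).
    by rewrite (bigD1 nu).
  move: H; rewrite /P e1 e2.
  set A := \sum_(i < N | i != nu) _.
  move=> H; lra.
by split; exists xs => //; rewrite mlfgE.
Qed.
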